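(* Let $\alpha\in(0,1)$ and $\vartheta>0$, and let $M_\alpha(u_1,u_2)=\min\{u_1^{1-\alpha}u_2,\,u_1\}$ (Marshall–Olkin copula) and $C_\vartheta(u_1,u_2)=(u_1^{-\vartheta}+u_2^{-\vartheta}-1)^{-1/\vartheta}$ (Clayton copula). Then $\Lambda(\boldsymbol w;M_\alpha)=0<\Lambda(\boldsymbol w;C_\vartheta)$ for all $\boldsymbol w\in(0,\infty)^2$, so $M_\alpha<_{TD}C_\vartheta$, while $C_\vartheta(t,t^\alpha)<M_\alpha(t,t^\alpha)=t$ for all $t\in(0,1)$. In particular $M_\alpha\le_{loc}C_\vartheta$ fails, so $C_1<_{TD}C_2$ does not imply $C_1\le_{loc}C_2$ in general.
   Context: The tail dependence function of a $d$-copula $C$ is $\Lambda(\boldsymbol w;C)=\lim_{s\searrow0}C(s\boldsymbol w)/s$, $\boldsymbol w\in[0,\infty)^d$. $C_1<_{TD}C_2$ means $\Lambda(\boldsymbol w;C_1)<\Lambda(\boldsymbol w;C_2)$ for all $\boldsymbol w\in(0,\infty)^d$. $C_1\le_{loc}C_2$ means there is $\varepsilon>0$ with $C_1(\boldsymbol u)\le C_2(\boldsymbol u)$ for all $\boldsymbol u\in B_\varepsilon(\boldsymbol 0)\cap[0,1]^d$ (Euclidean ball). *)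

(* Defs.v *)
From Stdlib Require Import Reals Lra.
From Coquelicot Require Import Coquelicot.
Open Scope R_scope.

(* Bivariate copulas are represented as functions R -> R -> R; only their
   values on [0,1]^2 matter. *)

(* Marshall-Olkin copula M_alpha(u1,u2) = min(u1^(1-alpha) u2, u1)
   (set to 0 on the boundary where some u_i = 0, where the formula gives 0). *)
Definition MO (alpha : R) (u1 u2 : R) : R :=
  if Rle_dec u1 0 then 0 else if Rle_dec u2 0 then 0
  else Rmin (Rpower u1 (1 - alpha) * u2) u1.

(* Clayton copula C_theta(u1,u2) = (u1^-theta + u2^-theta - 1)^(-1/theta),
   extended by 0 when some u_i = 0 (its continuous extension). *)
Definition Clayton (theta : R) (u1 u2 : R) : R :=
  if Rle_dec u1 0 then 0 else if Rle_dec u2 0 then 0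
  else Rpower (Rpower u1 (- theta) + Rpower u2 (- theta) - 1) (- / theta).

Definition is_tail_dep (C : R -> R -> R) (w1 w2 l : R) : Prop :=
  filterlim (fun s => C (s * w1) (s * w2) / s) (at_right 0) (locally l).

Definition TD_lt (C1 C2 : R -> R -> R) : Prop :=
  forall w1 w2, 0 < w1 -> 0 < w2 ->
    exists l1 l2, is_tail_dep C1 w1 w2 l1 /\ is_tail_dep C2 w1 w2 l2 /\ l1 < l2.

Definition loc_le (C1 C2 : R -> R -> R) : Prop :=
  exists eps, 0 < eps /\
    forall u1 u2, 0 <= u1 <= 1 -> 0 <= u2 <= 1 ->
      sqrt (u1 ^ 2 + u2 ^ 2) < eps -> C1 u1 u2 <= C2 u1 u2.

(* Main.v *)
Require Import Defs.
From Stdlib Require Import Reals.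
From Coquelicot Require Import Coquelicot.
From Stdlib Require Import Lra Psatz.
Open Scope R_scope.

Lemma lim_right (f : R -> R) l :
  (forall eps, 0 < eps -> exists d, 0 < d /\ forall s, 0 < s < d -> Rabs (f s - l) < eps) ->
  filterlim f (at_right 0) (locally l).
Proof.
  intros H. apply filterlim_locally. intros eps.
  destruct (H eps (cond_pos eps)) as [d [Hd H']].
  exists (mkposreal d Hd). intros y Hy Hpos.
  unfold ball; simpl; unfold AbsRing_ball, abs, minus, plus, opp; simpl.
  apply H'. unfold ball in Hy; simpl in Hy;
  unfold AbsRing_ball, abs, minus, plus, opp in Hy; simpl in Hy.
  apply Rabs_def2 in Hy. lra.
Qed.

Lemma Rpower_pos x y : 0 < Rpower x y.
Proof. unfold Rpower; apply exp_pos. Qed.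

Lemma Rpow0 b eps : 0 < b -> 0 < eps ->
  exists d, 0 < d /\ forall s, 0 < s < d -> Rpower s b < eps.
Proof.
  intros Hb He. exists (Rpower eps (/ b)). split. apply Rpower_pos.
  intros s Hs. apply Rlt_le_trans with (Rpower (Rpower eps (/b)) b).
  apply Rlt_Rpower_l; lra.
  rewrite Rpower_mult. replace (/ b * b) with 1 by (field; lra).
  rewrite Rpower_1; lra.
Qed.

Lemma Rpower_decr x y c : 0 < x < y -> c < 0 -> Rpower y c < Rpower x c.
Proof.
  intros H Hc. unfold Rpower. apply exp_increasing.
  assert (ln x < ln y) by (apply ln_increasing; lra). nra.
Qed.

Lemma Rpower_gt1 t e : 0 < t < 1 -> e < 0 -> 1 < Rpower t e.
Proof.
  intros H He. unfold Rpower. rewrite <- exp_0. apply exp_increasing.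
  assert (ln t < 0) by (rewrite <- ln_1; apply ln_increasing; lra). nra.
Qed.

Lemma part3 alpha theta : 0 < alpha < 1 -> 0 < theta ->
  forall t, 0 < t < 1 ->
     Clayton theta t (Rpower t alpha) < MO alpha t (Rpower t alpha) /\
     MO alpha t (Rpower t alpha) = t.
Proof.
  intros Ha Ht t H.
  assert (Hp := Rpower_pos t alpha).
  assert (HM : MO alpha t (Rpower t alpha) = t).
  { unfold MO. destruct (Rle_dec t 0); [lra|]. destruct (Rle_dec (Rpower t alpha) 0); [lra|].
    rewrite <- Rpower_plus. replace (1 - alpha + alpha) with 1 by ring.
    rewrite Rpower_1 by lra. unfold Rmin; destruct (Rle_dec t t); lra. }
  split; [|exact HM]. rewrite HM.
  unfold Clayton. destruct (Rle_dec t 0); [lra|]. destruct (Rle_dec (Rpower t alpha) 0); [lra|].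
  rewrite Rpower_mult.
  assert (H1 : 1 < Rpower t (alpha * - theta)) by (apply Rpower_gt1; nra).
  assert (H2 := Rpower_pos t (- theta)).
  apply Rlt_le_trans with (Rpower (Rpower t (- theta)) (- / theta)).
  apply Rpower_decr. lra. assert (0 < / theta) by (apply Rinv_0_lt_compat; lra). lra.
  rewrite Rpower_mult. replace (- theta * - / theta) with 1 by (field; lra).
  rewrite Rpower_1; lra.
Qed.

Lemma MO_tail alpha w1 w2 : 0 < alpha < 1 -> 0 < w1 -> 0 < w2 ->
  is_tail_dep (MO alpha) w1 w2 0.
Proof.
  intros Ha H1 H2. apply lim_right. intros eps He.
  set (K := Rpower w1 (1 - alpha) * w2).
  assert (HK : 0 < K) by (unfold K; assert (Hq:=Rpower_pos w1 (1-alpha)); nra).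
  destruct (Rpow0 (1 - alpha) (eps / K)) as [d [Hd Hd']]; [lra| apply Rdiv_lt_0_compat; lra|].
  exists d; split; [lra|]. intros s Hs.
  assert (Hs' := Hd' s Hs).
  unfold MO. destruct (Rle_dec (s * w1) 0); [nra|]. destruct (Rle_dec (s * w2) 0); [nra|].
  set (X := Rpower (s * w1) (1 - alpha)).
  assert (HX : X = Rpower s (1 - alpha) * Rpower w1 (1 - alpha))
    by (unfold X; rewrite Rpower_mult_distr; lra).
  assert (HX0 : 0 < X) by apply Rpower_pos.
  set (m := Rmin (X * (s * w2)) (s * w1)).
  assert (Hm : 0 <= m <= X * (s * w2)).
  { unfold m; split. apply Rmin_glb; nra. apply Rmin_l. }
  assert (Hms : m / s <= X * w2).
  { unfold Rdiv; apply Rmult_le_reg_r with s; [lra|].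
    rewrite Rmult_assoc, Rinv_l by lra. nra. }
  assert (0 <= m / s) by (apply Rdiv_le_0_compat; lra).
  rewrite Rminus_0_r, Rabs_pos_eq by lra.
  apply Rle_lt_trans with (X * w2); auto.
  rewrite HX. replace (Rpower s (1 - alpha) * Rpower w1 (1 - alpha) * w2)
    with (Rpower s (1 - alpha) * K) by (unfold K; ring).
  apply Rmult_lt_reg_r with (/ K). apply Rinv_0_lt_compat; lra.
  replace (Rpower s (1 - alpha) * K * / K) with (Rpower s (1 - alpha)) by (field; lra).
  exact Hs'.
Qed.

Lemma Clayton_eq theta w1 w2 s : 0 < theta -> 0 < w1 -> 0 < w2 -> 0 < s ->
  0 < Rpower w1 (- theta) + Rpower w2 (- theta) - Rpower s theta ->
  Clayton theta (s * w1) (s * w2) / s =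
  Rpower (Rpower w1 (- theta) + Rpower w2 (- theta) - Rpower s theta) (- / theta).
Proof.
  intros Ht H1 H2 Hs HB.
  set (B := Rpower w1 (- theta) + Rpower w2 (- theta) - Rpower s theta) in *.
  unfold Clayton. destruct (Rle_dec (s * w1) 0); [nra|]. destruct (Rle_dec (s * w2) 0); [nra|].
  assert (E : Rpower (s * w1) (- theta) + Rpower (s * w2) (- theta) - 1 =
              Rpower s (- theta) * B).
  { rewrite <- !Rpower_mult_distr by lra.
    assert (Rpower s (- theta) * Rpower s theta = 1).
    { rewrite <- Rpower_plus. replace (- theta + theta) with 0 by ring. apply Rpower_O; lra. }
    unfold B. nra. }
  rewrite E. rewrite <- Rpower_mult_distr by (apply Rpower_pos || lra).
  rewrite Rpower_mult. replace (- theta * - / theta) with 1 by (field; lra).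
  rewrite Rpower_1 by lra. field; lra.
Qed.

Lemma Clayton_tail theta w1 w2 : 0 < theta -> 0 < w1 -> 0 < w2 ->
  exists l, 0 < l /\ is_tail_dep (Clayton theta) w1 w2 l.
Proof.
  intros Ht H1 H2.
  set (A := Rpower w1 (- theta) + Rpower w2 (- theta)).
  assert (HA : 0 < A) by (unfold A; assert (Hq1:=Rpower_pos w1 (-theta)); assert (Hq2 := Rpower_pos w2 (-theta)); lra).
  exists (Rpower A (- / theta)). split. apply Rpower_pos.
  assert (Hc : continuity_pt (fun x => Rpower x (- / theta)) A).
  { apply derivable_continuous_pt. exists (- / theta * Rpower A (- / theta - 1)).
    apply derivable_pt_lim_power; lra. }
  unfold continuity_pt, continue_in, limit1_in, limit_in in Hc. simpl in Hc.
  unfold R_dist, D_x, no_cond in Hc.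
  apply lim_right. intros eps He.
  destruct (Hc eps He) as [alp [Halp Hal]].
  destruct (Rpow0 theta (Rmin alp A)) as [d [Hd Hd']]; [lra| apply Rmin_glb_lt; lra|].
  exists d; split; [lra|]. intros s Hs.
  assert (Hs' := Hd' s Hs).
  assert (Hm1 := Rmin_l alp A). assert (Hm2 := Rmin_r alp A).
  assert (Hps := Rpower_pos s theta).
  rewrite Clayton_eq by (try fold A; lra).
  fold A. apply Hal. split. split. auto. lra.
  rewrite Rabs_left; lra.
Qed.

Theorem mainTheorem4 (alpha theta : R) :
  0 < alpha < 1 -> 0 < theta ->
  (forall w1 w2, 0 < w1 -> 0 < w2 ->
     is_tail_dep (MO alpha) w1 w2 0 /\
     exists l, 0 < l /\ is_tail_dep (Clayton theta) w1 w2 l) /\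
  TD_lt (MO alpha) (Clayton theta) /\
  (forall t, 0 < t < 1 ->
     Clayton theta t (Rpower t alpha) < MO alpha t (Rpower t alpha) /\
     MO alpha t (Rpower t alpha) = t) /\
  ~ loc_le (MO alpha) (Clayton theta).
Proof.
  intros Ha Ht. split; [|split; [|split]].
  - intros w1 w2 H1 H2. split. apply MO_tail; auto. apply Clayton_tail; auto.
  - intros w1 w2 H1 H2. destruct (Clayton_tail theta w1 w2 Ht H1 H2) as [l [Hl Hl']].
    exists 0, l. split. apply MO_tail; auto. split; auto.
  - apply part3; auto.
  - intros [eps [Heps H]].
    destruct (Rpow0 alpha (eps / 2)) as [d [Hd Hd']]; [lra|lra|].
    set (t := Rmin (Rmin (d / 2) (eps / 4)) (1 / 2)).
    assert (Hx1 := Rmin_l (Rmin (d / 2) (eps / 4)) (1/2)).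
    assert (Hx2 := Rmin_r (Rmin (d / 2) (eps / 4)) (1/2)).
    assert (Hx3 := Rmin_l (d / 2) (eps / 4)). assert (Hx4 := Rmin_r (d / 2) (eps / 4)).
    assert (Ht0 : 0 < t). { unfold t. apply Rmin_glb_lt; [apply Rmin_glb_lt|]; lra. }
    fold t in Hx1, Hx2.
    assert (Htd : 0 < t < 1) by lra.
    assert (Hy := Hd' t ltac:(lra)).
    assert (Hy0 := Rpower_pos t alpha).
    destruct (part3 alpha theta Ha Ht t Htd) as [P1 P2].
    assert (Hle : MO alpha t (Rpower t alpha) <= Clayton theta t (Rpower t alpha)).
    assert (Hy1 : Rpower t alpha < 1).
    { assert (E1 : Rpower 1 alpha = 1) by (unfold Rpower; rewrite ln_1, Rmult_0_r; apply exp_0).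
      rewrite <- E1. apply Rlt_Rpower_l; lra. }
    { apply H. lra. lra.
      rewrite <- (sqrt_pow2 eps) by lra. apply sqrt_lt_1.
      nra. nra. nra. }
    lra.
Qed.
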